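(* For every $m\ge0$, the expected number of internal vertices of a free triangulation of an $(m+2)$-gon is \[ \frac{1}{Z_m}\sum_{n\ge0} n\,\phi_{n,m}\,\alpha^{-n} = \frac{(m+1)(2m+1)}{3}. \]
   Context: $\phi_{n,m}=\frac{2^{n+1}(2m+1)!(2m+3n)!}{m!^2 n!(2m+2n+2)!}$ is the number of rooted type II triangulations (multiple edges allowed, no loops) of a disc with $m+2$ boundary vertices and $n$ internal vertices, with the convention $\phi_{0,0}=1$. Let $\alpha=27/2$ and $Z_m=\sum_n\phi_{n,m}\alpha^{-n}=\frac{(2m)!}{m!(m+2)!}(9/4)^{m+1}$. The free triangulation of an $(m+2)$-gon has law $\mu_m$, which gives each rooted triangulation of the $(m+2)$-gon with $n$ internal vertices weight $\alpha^{-n}/Z_m$. *)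

(* Defs.v *)
From Stdlib Require Import Reals Arith Factorial.
From Coquelicot Require Import Coquelicot.
Open Scope R_scope.

(* phi n m : number of rooted type II triangulations of an (m+2)-gon with
   n internal vertices, given by the closed formula of the paper. *)
Definition phi (n m : nat) : R :=
  2 ^ (n + 1) * INR (fact (2 * m + 1)) * INR (fact (2 * m + 3 * n))
  / (INR (fact m) ^ 2 * INR (fact n) * INR (fact (2 * m + 2 * n + 2))).

Definition alpha : R := 27 / 2.

Definition weight (n m : nat) : R := phi n m / alpha ^ n.

Definition Zm (m : nat) : R := Series (fun n => weight n m).

(* Main.v *)
Require Import Defs.
From Stdlib Require Import Reals Lra Lia Factorial.
From Coquelicot Require Import Coquelicot.
Open Scope R_scope.

Lemma fS k : INR (fact (S k)) = (INR k + 1) * INR (fact k).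
Proof. rewrite fact_simpl, mult_INR, S_INR. ring. Qed.
Lemma fadd2 k : INR (fact (k+2)) = (INR k + 1)*(INR k + 2) * INR (fact k).
Proof. replace (k+2)%nat with (S (S k)) by lia. rewrite !fS, S_INR. ring. Qed.
Lemma fadd3 k : INR (fact (k+3)) = (INR k + 1)*(INR k + 2)*(INR k+3) * INR (fact k).
Proof. replace (k+3)%nat with (S (S (S k))) by lia. rewrite !fS, !S_INR. ring. Qed.

Ltac posfacts n m :=
  pose proof (pos_INR n); pose proof (pos_INR m);
  pose proof (INR_fact_lt_0 (2*m+3*n)); pose proof (INR_fact_lt_0 (2*m+2*n+2));
  pose proof (INR_fact_lt_0 n); pose proof (INR_fact_lt_0 m);
  pose proof (INR_fact_lt_0 (2*m+1)).

Lemma w_Sn n m : weight (S n) m = weight n m *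
  (4 * (2*INR m+3*INR n+1)*(2*INR m+3*INR n+2)*(2*INR m+3*INR n+3)) /
  (27 * (INR n+1)*(2*INR m+2*INR n+3)*(2*INR m+2*INR n+4)).
Proof.
  unfold weight, phi, alpha.
  replace (2*m+3*S n)%nat with ((2*m+3*n)+3)%nat by lia.
  replace (2*m+2*S n+2)%nat with ((2*m+2*n+2)+2)%nat by lia.
  replace (S n + 1)%nat with (S (n+1)) by lia.
  rewrite <- (tech_pow_Rmult 2 (n+1)), <- (tech_pow_Rmult _ n).
  rewrite fadd3, fadd2, fS.
  rewrite !plus_INR, !mult_INR. simpl (INR 2). simpl (INR 3).
  posfacts n m.
  assert (0 < (27/2)^n) by (apply pow_lt; lra).
  field. repeat split; lra.
Qed.

Lemma w_nS n m : weight n (S m) = weight n m *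
  ((2*INR m+2)*(2*INR m+3)*(2*INR m+3*INR n+1)*(2*INR m+3*INR n+2)) /
  ((INR m+1)^2*(2*INR m+2*INR n+3)*(2*INR m+2*INR n+4)).
Proof.
  unfold weight, phi, alpha.
  replace (2*S m+1)%nat with ((2*m+1)+2)%nat by lia.
  replace (2*S m+3*n)%nat with ((2*m+3*n)+2)%nat by lia.
  replace (2*S m+2*n+2)%nat with ((2*m+2*n+2)+2)%nat by lia.
  rewrite (fadd2 (2*m+1)), (fadd2 (2*m+3*n)), (fadd2 (2*m+2*n+2)), fS.
  rewrite !plus_INR, !mult_INR. simpl (INR 2). simpl (INR 3).
  posfacts n m.
  assert (0 < (27/2)^n) by (apply pow_lt; lra).
  change (INR 1) with 1. field. repeat split; lra.
Qed.
Definition aa (m:nat) := 4*(INR m+1)*(2*INR m+1)/9.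
Definition bb (m:nat) := 2*(INR m+1)*(INR m+3)/81.
Definition G1 (m n:nat) := - INR n*(2*INR n+(8*INR m+9)/3) * weight n m.

Lemma I1 n m : INR n * weight n m - aa m * weight n m + bb m * weight n (S m)
  = G1 m (S n) - G1 m n.
Proof.
  unfold G1, aa, bb. rewrite w_Sn, w_nS, S_INR.
  pose proof (pos_INR n). pose proof (pos_INR m).
  field. repeat split; lra.
Qed.

Definition c0 (m:nat) := 81*(2*INR m+1)*(2*INR m+3)/((INR m+2)*(INR m+4)).
Definition c1 (m:nat) := -9*(2*INR m+3)*(5*INR m+14)/(2*(INR m+2)*(INR m+4)).
Definition G2 (m n:nat) :=
  let x := INR n in let y := INR m in
  (2*y+3)/(4*(y+1)*(y+2)*(y+4)) * x *
  (27*(40*y^3+190*y^2+287*y+128)+81*(26*y^2+79*y+62)*x+972*(y+1)*x^2)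
  / ((x+y+2)*(2*x+2*y+3)/2) * weight n m.

Lemma I2 n m : weight n (S (S m)) + c1 m * weight n (S m) + c0 m * weight n m
  = G2 m (S n) - G2 m n.
Proof.
  unfold G2, c0, c1. rewrite !w_nS, w_Sn, !S_INR.
  pose proof (pos_INR n). pose proof (pos_INR m).
  field. repeat split; lra.
Qed.

Lemma sumS (a : nat -> R) n : sum_n a (S n) = sum_n a n + a (S n).
Proof. rewrite sum_Sn. reflexivity. Qed.
Lemma sum0 (a : nat -> R) : sum_n a 0 = a 0%nat.
Proof. rewrite sum_O. reflexivity. Qed.

Ltac toR := match goal with |- @eq _ ?x ?y => change (@eq R x y) end.

Lemma sum_le (a b : nat -> R) N : (forall n, a n <= b n) -> sum_n a N <= sum_n b N.
Proof. intros H; induction N. rewrite !sum0; auto. rewrite !sumS. specialize (H (S N)); lra. Qed.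

Lemma sum_lin (a b c: nat -> R) (x y : R) N :
  sum_n (fun k => a k - x * b k + y * c k) N = sum_n a N - x * sum_n b N + y * sum_n c N.
Proof. induction N. rewrite !sum0; toR; ring. rewrite !sumS, IHN. toR; ring. Qed.

Lemma sum_lin3 (a b c: nat -> R) (x y : R) N :
  sum_n (fun k => a k + x * b k + y * c k) N = sum_n a N + x * sum_n b N + y * sum_n c N.
Proof. induction N. rewrite !sum0; toR; ring. rewrite !sumS, IHN. toR; ring. Qed.

Lemma sum_tele (G : nat -> R) N : sum_n (fun k => G (S k) - G k) N = G (S N) - G 0%nat.
Proof. induction N. rewrite sum0; toR; ring. rewrite sumS, IHN. toR; ring. Qed.

Lemma sum_nonneg (a : nat -> R) N : (forall n, 0 <= a n) -> 0 <= sum_n a N.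
Proof. intros H; induction N. rewrite sum0; auto. rewrite sumS. specialize (H (S N)); lra. Qed.

Lemma ex_series_bnd (a : nat -> R) M :
  (forall n, 0 <= a n) -> (forall N, sum_n a N <= M) -> ex_series a.
Proof.
  intros Hp HM.
  destruct (growing_cv (sum_n a)) as [l Hl].
  - intros n. rewrite sumS. specialize (Hp (S n)). lra.
  - exists M. intros x [N ->]. apply HM.
  - exists l. apply is_lim_seq_Reals in Hl. exact Hl.
Qed.

Lemma series_lim (a : nat -> R) : ex_series a -> is_lim_seq (sum_n a) (Series a).
Proof. intros H. apply Series_correct in H. exact H. Qed.

Lemma partial_le_series (a : nat -> R) N :
  (forall n, 0 <= a n) -> ex_series a -> sum_n a N <= Series a.
Proof.
  intros Hp He. apply (is_lim_seq_incr_compare (sum_n a)).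
  apply series_lim; auto.
  intros n. rewrite sumS. specialize (Hp (S n)). lra.
Qed.

Lemma series_nonneg (a : nat -> R) : (forall n, 0 <= a n) -> ex_series a -> 0 <= Series a.
Proof.
  intros Hp He. apply Rle_trans with (sum_n a 0). rewrite sum0; auto.
  apply partial_le_series; auto.
Qed.

Lemma harmonic_div : ~ ex_series (fun k => / (INR k + 1)).
Proof.
  intros H. apply (@Cauchy_ex_series R_AbsRing R_CompleteNormedModule) in H.
  destruct (H (mkposreal (1/2) ltac:(lra))) as [N HN].
  specialize (HN (S N) (S (N+N))). 
  assert (Hb : forall j, (j <= N)%nat ->
     INR (S j) / (INR (N+N) + 2) <= sum_n_m (fun k => / (INR k + 1)) (S N) (S N + j)).
  { induction j; intros Hj.
    - rewrite Nat.add_0_r, sum_n_n. change (INR 1) with 1. rewrite S_INR, plus_INR.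
      pose proof (pos_INR N). unfold Rdiv. rewrite Rmult_1_l.
      apply Rinv_le_contravar; lra.
    - rewrite Nat.add_succ_r, sum_n_Sm by lia.
      change (plus ?x ?y) with (x + y).
      assert (IH := IHj ltac:(lia)).
      rewrite (S_INR (S j)).
      assert (/ (INR (S (S N + j)) + 1) >= / (INR (N+N) + 2)).
      { apply Rle_ge, Rinv_le_contravar. pose proof (pos_INR (S (S N + j))); lra.
        rewrite !S_INR, !plus_INR. apply le_INR in Hj. rewrite S_INR in Hj. rewrite S_INR. lra. }
      pose proof (pos_INR (N+N)).
      unfold Rdiv in *. rewrite Rmult_plus_distr_r. lra. }
  specialize (Hb N (le_n N)).
  replace (S N + N)%nat with (S (N+N)) in Hb by lia.
  assert (Hlt : norm (sum_n_m (fun k => / (INR k + 1)) (S N) (S (N+N))) < 1/2).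
  { apply HN; lia. }
  change norm with Rabs in Hlt. simpl in Hlt.
  rewrite S_INR, plus_INR in Hb.
  pose proof (pos_INR N).
  assert (INR N + 1 >= (INR N + INR N + 2) / 2) by lra.
  assert ((INR N + 1) / (INR N + INR N + 2) = 1/2) by (field; lra).
  rewrite H2 in Hb.
  pose proof (Rle_abs (sum_n_m (fun k : nat => / (INR k + 1)) (S N) (S (N + N)))).
  lra.
Qed.

Lemma w_pos n m : 0 < weight n m.
Proof.
  unfold weight, phi, alpha.
  pose proof (INR_fact_lt_0 (2*m+3*n)). pose proof (INR_fact_lt_0 (2*m+2*n+2)).
  pose proof (INR_fact_lt_0 n). pose proof (INR_fact_lt_0 m).
  pose proof (INR_fact_lt_0 (2*m+1)).
  assert (0 < (27/2)^n) by (apply pow_lt; lra).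
  assert (0 < 2^(n+1)) by (apply pow_lt; lra).
  apply Rdiv_lt_0_compat; auto.
  apply Rdiv_lt_0_compat. apply Rmult_lt_0_compat; auto. apply Rmult_lt_0_compat; auto.
  apply Rmult_lt_0_compat; auto. apply Rmult_lt_0_compat; auto. apply pow_lt; auto.
Qed.

Lemma term_le_sum f N k : (forall i, 0 <= f i) -> (k <= N)%nat -> f k <= sum_f_R0 f N.
Proof.
  intros Hp. induction N; intros Hk.
  - inversion Hk. simpl. lra.
  - simpl. destruct (Nat.eq_dec k (S N)) as [->|Hne].
    + pose proof (cond_pos_sum f N Hp). lra.
    + pose proof (IHN ltac:(lia)). specialize (Hp (S N)). lra.
Qed.

Lemma binom_bd N k : (k <= N)%nat ->
  INR (fact N) * (1/2)^k <= (3/2)^N * (INR (fact k) * INR (fact (N-k))).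
Proof.
  intros Hk.
  pose proof (binomial (1/2) 1 N) as HB.
  replace (1/2+1) with (3/2) in HB by lra.
  pose proof (INR_fact_lt_0 k). pose proof (INR_fact_lt_0 (N-k)). pose proof (INR_fact_lt_0 N).
  assert (Hf : forall i, 0 <= Binomial.C N i * (1/2)^i * 1^(N-i)).
  { intros i. unfold Binomial.C. pose proof (INR_fact_lt_0 i). pose proof (INR_fact_lt_0 (N-i)).
    assert (0 < (1/2)^i) by (apply pow_lt; lra).
    rewrite pow1. apply Rmult_le_pos; [|lra]. apply Rmult_le_pos; [|lra].
    apply Rlt_le, Rdiv_lt_0_compat; auto. apply Rmult_lt_0_compat; auto. }
  pose proof (term_le_sum _ N k Hf Hk) as Ht. rewrite <- HB in Ht.
  unfold Binomial.C in Ht. rewrite pow1 in Ht.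
  replace (INR (fact N) * (1/2)^k) with
     (INR (fact N) / (INR (fact k) * INR (fact (N-k))) * (1/2)^k * 1 * (INR (fact k) * INR (fact (N-k)))) by (field; lra).
  apply Rmult_le_compat_r; auto. apply Rlt_le, Rmult_lt_0_compat; auto.
Qed.

Definition Kb (m:nat) := 2 * INR (fact (2*m+1)) / INR (fact m)^2 * (9/4)^m.

Lemma binom_bd2 n m :
  INR (fact (2*m+3*n)) * (4/27)^n <= (9/4)^m * (INR (fact n) * INR (fact (2*m+2*n))).
Proof.
  pose proof (binom_bd (2*m+3*n) n ltac:(lia)) as B.
  replace (2*m+3*n-n)%nat with (2*m+2*n)%nat in B by lia.
  rewrite pow_add, !pow_mult in B.
  replace ((3/2)^2) with (9/4) in B by (simpl; field).
  replace ((3/2)^3) with (27/8) in B by (simpl; field).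
  assert (0 < (8/27)^n) by (apply pow_lt; lra).
  apply Rmult_le_compat_r with (r := (8/27)^n) in B; [|lra].
  replace (4/27) with (1/2 * (8/27)) by field.
  rewrite Rpow_mult_distr.
  replace ((9/4)^m * (INR (fact n) * INR (fact (2*m+2*n)))) with
     ((9/4)^m * ((27/8)^n * (8/27)^n) * (INR (fact n) * INR (fact (2*m+2*n)))).
  2:{ rewrite <- Rpow_mult_distr. replace (27/8*(8/27)) with 1 by field. rewrite pow1. ring. }
  lra.
Qed.

Lemma w_bound n m : weight n m <= Kb m * / ((INR n + 1) * (INR n + 2)).
Proof.
  pose proof (binom_bd2 n m) as B.
  pose proof (pos_INR n). pose proof (pos_INR m).
  pose proof (INR_fact_lt_0 (2*m+3*n)). pose proof (INR_fact_lt_0 (2*m+2*n)).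
  pose proof (INR_fact_lt_0 n). pose proof (INR_fact_lt_0 m).
  pose proof (INR_fact_lt_0 (2*m+1)).
  assert (0 < (27/2)^n) by (apply pow_lt; lra).
  assert (0 < (4/27)^n) by (apply pow_lt; lra).
  assert (Hp : 2^n = (4/27)^n * (27/2)^n).
  { rewrite <- Rpow_mult_distr. f_equal. field. }
  set (A := 2*INR m+2*INR n+1). set (Bq := 2*INR m+2*INR n+2).
  assert (E : weight n m = (2 * INR (fact (2*m+1)) / INR (fact m)^2) *
            (INR (fact (2*m+3*n)) * (4/27)^n / (INR (fact n) * INR (fact (2*m+2*n)))) * / (A*Bq)).
  { unfold weight, phi, alpha, A, Bq.
    rewrite (fadd2 (2*m+2*n)), pow_add, Hp. rewrite !plus_INR, !mult_INR. simpl (INR 2).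
    field. repeat split; lra. }
  rewrite E. unfold Kb. rewrite Rmult_assoc, (Rmult_assoc _ ((9/4)^m)).
  apply Rmult_le_compat_l.
  { apply Rlt_le, Rdiv_lt_0_compat. lra. apply pow_lt; lra. }
  apply Rmult_le_compat.
  - apply Rlt_le, Rdiv_lt_0_compat. nra. nra.
  - apply Rlt_le, Rinv_0_lt_compat. unfold A, Bq; nra.
  - apply Rle_div_l. nra. lra.
  - apply Rinv_le_contravar. nra. unfold A, Bq. nra.
Qed.

Lemma ex_w m : ex_series (fun n => weight n m).
Proof.
  apply ex_series_bnd with (M := Kb m).
  - intros n; apply Rlt_le, w_pos.
  - intros N.
    assert (HK : 0 <= Kb m).
    { unfold Kb. pose proof (INR_fact_lt_0 (2*m+1)). pose proof (INR_fact_lt_0 m).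
      assert (0 < (9/4)^m) by (apply pow_lt; lra).
      apply Rmult_le_pos; [|lra]. apply Rlt_le, Rdiv_lt_0_compat. lra. apply pow_lt; lra. }
    apply Rle_trans with (sum_n (fun k => Kb m * (/ (INR k + 1) - / (INR (S k) + 1))) N).
    + apply sum_le. intros k. replace (/ (INR k + 1) - / (INR (S k) + 1)) with
        (/ ((INR k + 1) * (INR k + 2))). apply w_bound.
      rewrite S_INR. pose proof (pos_INR k). field. lra.
    + assert (forall N, sum_n (fun k => Kb m * (/ (INR k + 1) - / (INR (S k) + 1))) N
               = Kb m * (1 - / (INR (S N) + 1))).
      { induction N0. rewrite sum0. simpl. field. rewrite sumS, IHN0. toR. ring. }
      rewrite H. pose proof (pos_INR (S N)).
      assert (0 < / (INR (S N) + 1)) by (apply Rinv_0_lt_compat; lra). nra.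
Qed.

Lemma lim_comb (u v z : nat -> R) (lu lv lz x y : R) :
  is_lim_seq u lu -> is_lim_seq v lv -> is_lim_seq z lz ->
  is_lim_seq (fun N => u N - x * v N + y * z N) (lu - x * lv + y * lz).
Proof.
  intros Hu Hv Hz. apply is_lim_seq_plus'. apply is_lim_seq_minus'; auto.
  apply is_lim_seq_mult'; auto. apply is_lim_seq_const.
  apply is_lim_seq_mult'; auto. apply is_lim_seq_const.
Qed.

Lemma lim_comb3 (u v z : nat -> R) (lu lv lz x y : R) :
  is_lim_seq u lu -> is_lim_seq v lv -> is_lim_seq z lz ->
  is_lim_seq (fun N => u N + x * v N + y * z N) (lu + x * lv + y * lz).
Proof.
  intros Hu Hv Hz. apply is_lim_seq_plus'. apply is_lim_seq_plus'; auto.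
  apply is_lim_seq_mult'; auto. apply is_lim_seq_const.
  apply is_lim_seq_mult'; auto. apply is_lim_seq_const.
Qed.

Lemma T_part m :
  ex_series (fun n => INR n * weight n m) /\
  Series (fun n => INR n * weight n m) =
    aa m * Series (fun n => weight n m) - bb m * Series (fun n => weight n (S m)).
Proof.
  set (x := fun n => INR n * weight n m).
  set (w0 := fun n => weight n m). set (w1 := fun n => weight n (S m)).
  assert (Hid : forall N, sum_n x N - aa m * sum_n w0 N + bb m * sum_n w1 N = G1 m (S N)).
  { intros N. rewrite <- sum_lin.
    rewrite (sum_n_ext _ (fun k => G1 m (S k) - G1 m k)).
    2:{ intros k. unfold x, w0, w1. apply I1. }
    rewrite sum_tele. unfold G1. simpl (INR 0). toR. ring. }
  assert (HG : forall N, G1 m N <= 0).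
  { intros N. unfold G1. pose proof (pos_INR N). pose proof (pos_INR m).
    pose proof (w_pos N m). assert (0 <= INR N * (2 * INR N + (8 * INR m + 9) / 3)) by nra. nra. }
  assert (Hbb : 0 <= bb m) by (unfold bb; pose proof (pos_INR m); nra).
  assert (Hxp : forall n, 0 <= x n).
  { intros n. unfold x. pose proof (pos_INR n). pose proof (w_pos n m). nra. }
  assert (Hw0 : forall n, 0 <= w0 n) by (intros; apply Rlt_le, w_pos).
  assert (Hw1 : forall n, 0 <= w1 n) by (intros; apply Rlt_le, w_pos).
  assert (Ex : ex_series x).
  { apply ex_series_bnd with (M := aa m * Series w0); auto.
    intros N. pose proof (Hid N). pose proof (HG (S N)).
    pose proof (sum_nonneg w1 N Hw1).
    pose proof (partial_le_series w0 N Hw0 (ex_w m)).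
    assert (0 <= aa m) by (unfold aa; pose proof (pos_INR m); nra).
    assert (0 <= bb m * sum_n w1 N) by nra.
    assert (aa m * sum_n w0 N <= aa m * Series w0) by nra. lra. }
  split; [exact Ex|].
  set (L := Series x - aa m * Series w0 + bb m * Series w1).
  assert (HL : is_lim_seq (fun N => G1 m (S N)) L).
  { apply is_lim_seq_ext with (fun N => sum_n x N - aa m * sum_n w0 N + bb m * sum_n w1 N).
    exact Hid. apply lim_comb; apply series_lim; auto. apply ex_w. apply ex_w. }
  assert (HL0 : L <= 0).
  { apply (is_lim_seq_le (fun N => G1 m (S N)) (fun _ => 0) L 0); auto.
    apply is_lim_seq_const. }
  destruct (Req_dec L 0) as [HL1|HL1].
  { unfold L in HL1. lra. }
  exfalso. apply harmonic_div.
  assert (Lneg : L < 0) by lra.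
  apply is_lim_seq_spec in HL.
  destruct (HL (mkposreal (-L/2) ltac:(lra))) as [N0 HN0]. simpl in HN0.
  set (c := (8 * INR m + 9) / 3).
  assert (Hc : 0 < c) by (unfold c; pose proof (pos_INR m); lra).
  set (d := (-L/2) / (2 + c)).
  assert (Hd : 0 < d) by (unfold d; apply Rdiv_lt_0_compat; lra).
  assert (Hlow : forall k, d / (INR N0 + 1) * / (INR k + 1) <= x (S (N0 + k))).
  { intros k. specialize (HN0 (N0 + k)%nat ltac:(lia)).
    apply Rabs_def2 in HN0. destruct HN0 as [HN0 _].
    unfold G1 in HN0. fold c in HN0.
    unfold x. set (y := INR (S (N0+k))) in *.
    assert (Hy : y = INR N0 + INR k + 1) by (unfold y; rewrite S_INR, plus_INR; ring).
    pose proof (pos_INR N0). pose proof (pos_INR k).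
    set (ww := weight (S (N0 + k)) m) in *.
    assert (Hww : 0 < ww) by apply w_pos.
    assert (H1 : y * (2 * y + c) * ww > - L / 2).
    { assert (E : - y * (2*y+c)*ww = -(y*(2*y+c)*ww)) by ring. lra. }
    assert (H2 : 2 * y + c <= (2 + c) * y) by (rewrite Hy; nra).
    assert (H3 : y * ww * ((2 + c) * y) >= -L/2).
    { assert (0 <= y*ww) by nra. nra. }
    assert (H4 : y * ww >= d / y).
    { unfold d. apply Rle_ge. apply Rle_div_l. lra. 
      apply Rle_div_l. lra. nra. }
    assert (H5 : d / (INR N0 + 1) * / (INR k + 1) <= d / y).
    { rewrite Hy. unfold Rdiv. rewrite Rmult_assoc, <- Rinv_mult.
      apply Rmult_le_compat_l. lra. apply Rinv_le_contravar. nra. nra. }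
    lra. }
  assert (Ex2 : ex_series (fun k => x (S (N0 + k)))).
  { apply ex_series_incr_1 in Ex. apply (ex_series_incr_n _ N0) in Ex.
    eapply ex_series_ext; [|exact Ex]. intros k. simpl. f_equal. }
  assert (Hdd : 0 < d / (INR N0 + 1)) by (apply Rdiv_lt_0_compat; [lra| pose proof (pos_INR N0); lra]).
  apply (@ex_series_le R_AbsRing R_CompleteNormedModule _ (fun k => / (d / (INR N0 + 1)) * x (S (N0 + k)))).
  - intros k. change norm with Rabs. simpl.
    pose proof (pos_INR k). rewrite Rabs_right.
    2:{ apply Rle_ge, Rlt_le, Rinv_0_lt_compat. lra. }
    specialize (Hlow k).
    apply Rmult_le_reg_l with (d / (INR N0 + 1)). lra.
    rewrite <- Rmult_assoc, Rinv_r by lra. lra.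
  - apply ex_series_scal_l with (c := / (d / (INR N0 + 1))) in Ex2. exact Ex2.
Qed.

Lemma G2_bound m n : 0 <= G2 m n <=
  ((2*INR m+3)/(4*(INR m+1)*(INR m+2)*(INR m+4)) *
   (27*(40*INR m^3+190*INR m^2+287*INR m+128)+81*(26*INR m^2+79*INR m+62)+972*(INR m+1)))
  * (INR n * weight n m).
Proof.
  unfold G2. set (x := INR n). set (y := INR m).
  pose proof (pos_INR n) as Hx. pose proof (pos_INR m) as Hy. fold x y in Hx, Hy.
  pose proof (w_pos n m) as Hw. set (ww := weight n m) in *.
  set (K := (2*y+3)/(4*(y+1)*(y+2)*(y+4))).
  assert (HK : 0 < K) by (unfold K; apply Rdiv_lt_0_compat; nra).
  set (al := 27*(40*y^3+190*y^2+287*y+128)).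
  set (be := 81*(26*y^2+79*y+62)).
  set (ga := 972*(y+1)).
  assert (Hal : 0 <= al) by (unfold al; nra).
  assert (Hbe : 0 <= be) by (unfold be; nra).
  assert (Hga : 0 <= ga) by (unfold ga; nra).
  set (D := (x+y+2)*(2*x+2*y+3)/2).
  assert (HD : 0 < D) by (unfold D; nra).
  set (Pol := al + be * x + ga * x^2).
  assert (HP : 0 <= Pol) by (unfold Pol; nra).
  assert (HPD : Pol <= (al+be+ga) * D).
  { assert (al <= al * (x+1)^2) by nra.
    assert (be * x <= be * (x+1)^2) by nra.
    assert (ga * x^2 <= ga * (x+1)^2) by nra.
    assert ((x+1)^2 <= D) by (unfold D; nra).
    assert ((al+be+ga)*(x+1)^2 <= (al+be+ga)*D) by nra.
    unfold Pol. nra. }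
  replace (K * x * Pol / D * ww) with ((K * x * ww) * (Pol / D)) by (field; lra).
  assert (HQ : Pol / D <= al + be + ga) by (apply Rle_div_l; lra).
  assert (HQ0 : 0 <= Pol / D) by (apply Rle_div_r; lra).
  assert (0 <= K * x * ww) by (apply Rmult_le_pos; nra).
  split. nra.
  replace (K * (al + be + ga) * (x * ww)) with ((K*x*ww)*(al+be+ga)) by ring.
  apply Rmult_le_compat_l; auto.
Qed.

Lemma rec_part m :
  Series (fun n => weight n (S (S m))) + c1 m * Series (fun n => weight n (S m))
   + c0 m * Series (fun n => weight n m) = 0.
Proof.
  set (w0 := fun n => weight n m). set (w1 := fun n => weight n (S m)).
  set (w2 := fun n => weight n (S (S m))).
  assert (Hid : forall N, sum_n w2 N + c1 m * sum_n w1 N + c0 m * sum_n w0 N = G2 m (S N)).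
  { intros N. rewrite <- sum_lin3.
    rewrite (sum_n_ext _ (fun k => G2 m (S k) - G2 m k)).
    2:{ intros k. unfold w0, w1, w2. apply I2. }
    rewrite sum_tele. unfold G2. simpl (INR 0). toR. field.
    pose proof (pos_INR m). pose proof (pos_INR (S N)). repeat split; lra. }
  assert (H1 : is_lim_seq (fun N => G2 m (S N)) (Series w2 + c1 m * Series w1 + c0 m * Series w0)).
  { apply is_lim_seq_ext with (1 := Hid). apply lim_comb3; apply series_lim; apply ex_w. }
  assert (H2 : is_lim_seq (fun N => G2 m N) 0).
  { destruct (T_part m) as [ExT _].
    pose proof (ex_series_lim_0 _ ExT) as HT.
    eapply is_lim_seq_le_le.
    - intros n. apply G2_bound.
    - apply is_lim_seq_const.
    - match goal with |- is_lim_seq (fun n => ?C * _) _ =>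
        pose proof (is_lim_seq_mult' (fun _ => C) _ C 0 (is_lim_seq_const C) HT) as HT2 end.
      rewrite Rmult_0_r in HT2. exact HT2. }
  apply is_lim_seq_incr_1 in H2.
  apply is_lim_seq_unique in H1. apply is_lim_seq_unique in H2.
  rewrite H2 in H1. injection H1. intros; lra.
Qed.

Definition Ssum (m:nat) := Series (fun n => weight n m).
Definition lam (m:nat) := 9*(2*INR m+1)/(2*(INR m+3)).
Fixpoint Zr (m:nat) : R := match m with O => 1 | S k => lam k * Zr k end.
Definition uu (m:nat) := Ssum m / Zr m.
Definition ee (m:nat) := uu (S m) - uu m.

Lemma lam_pos m : 0 < lam m.
Proof. unfold lam. pose proof (pos_INR m). apply Rdiv_lt_0_compat; lra. Qed.

Lemma Zr_pos m : 0 < Zr m.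
Proof. induction m; simpl. lra. pose proof (lam_pos m). nra. Qed.

Lemma S_pos m : 0 < Ssum m.
Proof.
  unfold Ssum. apply Rlt_le_trans with (sum_n (fun n => weight n m) 0).
  rewrite sum0. apply w_pos.
  apply partial_le_series. intros; apply Rlt_le, w_pos. apply ex_w.
Qed.

Lemma S_as_u m : Ssum m = uu m * Zr m.
Proof. unfold uu. pose proof (Zr_pos m). field. lra. Qed.

Lemma S_growth m : Ssum (S m) <= 4 * lam m * Ssum m.
Proof.
  destruct (T_part m) as [ExT HT].
  assert (0 <= Series (fun n => INR n * weight n m)).
  { apply series_nonneg; auto. intros n. pose proof (pos_INR n). pose proof (w_pos n m). nra. }
  assert (Hbb : 0 < bb m) by (unfold bb; pose proof (pos_INR m); nra).
  assert (Hab : aa m = 4 * lam m * bb m).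
  { unfold aa, bb, lam. pose proof (pos_INR m). field. lra. }
  unfold Ssum. rewrite Hab in HT.
  assert (bb m * Series (fun n => weight n (S m)) <= bb m * (4 * lam m * Series (fun n => weight n m))) by nra.
  apply Rmult_le_reg_l with (bb m); auto.
Qed.

Lemma u_growth m : uu (S m) <= 4 * uu m.
Proof.
  pose proof (S_growth m). rewrite !S_as_u in H. simpl in H.
  pose proof (lam_pos m). pose proof (Zr_pos m).
  assert (0 < lam m * Zr m) by nra.
  apply Rmult_le_reg_r with (lam m * Zr m); auto. nra.
Qed.

Lemma u_nonneg m : 0 <= uu m.
Proof. unfold uu. pose proof (S_pos m). pose proof (Zr_pos m). apply Rlt_le, Rdiv_lt_0_compat; auto. Qed.

Lemma e_rec m : ee (S m) = 4 * (INR m + 3) / (INR m + 2) * ee m.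
Proof.
  pose proof (rec_part m) as R. fold (Ssum (S (S m))) (Ssum (S m)) (Ssum m) in R.
  rewrite !S_as_u in R. simpl in R.
  pose proof (pos_INR m).
  pose proof (Zr_pos m). pose proof (lam_pos m). pose proof (lam_pos (S m)).
  assert (Id : lam (S m) * lam m * Zr m *
     (ee (S m) - 4 * (INR m + 3) / (INR m + 2) * ee m) =
     uu (S (S m)) * (lam (S m) * (lam m * Zr m)) + c1 m * (uu (S m) * (lam m * Zr m)) +
     c0 m * (uu m * Zr m)).
  { unfold ee, lam, c0, c1. rewrite S_INR. field. repeat split; lra. }
  rewrite R in Id.
  apply Rmult_integral in Id. destruct Id as [Id|Id]; [|lra].
  exfalso. assert (0 < lam (S m) * lam m * Zr m) by (apply Rmult_lt_0_compat; nra). lra.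
Qed.

Lemma e_closed m : ee m = ee 0 * 4^m * (INR m + 2) / 2.
Proof.
  induction m. simpl. field.
  rewrite e_rec, IHm, S_INR. simpl. pose proof (pos_INR m). field. lra.
Qed.

Lemma u_pow m : uu m <= 4^m * uu 0.
Proof.
  induction m. simpl. lra.
  pose proof (u_growth m). simpl. lra.
Qed.

Lemma e0_zero : ee 0 = 0.
Proof.
  destruct (Req_dec (ee 0) 0) as [H|H]; auto. exfalso.
  assert (Ha : 0 < Rabs (ee 0)) by (apply Rabs_pos_lt; auto).
  pose proof (u_nonneg 0).
  destruct (INR_unbounded (10 * uu 0 / Rabs (ee 0))) as [m Hm].
  assert (Hb : Rabs (ee m) <= 5 * 4^m * uu 0).
  { unfold ee. pose proof (u_nonneg m). pose proof (u_nonneg (S m)).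
    pose proof (u_growth m). pose proof (u_pow m).
    apply Rabs_le. split; lra. }
  rewrite e_closed in Hb.
  assert (0 < 4^m) by (apply pow_lt; lra).
  pose proof (pos_INR m).
  assert (HE : Rabs (ee 0 * 4^m * (INR m + 2) / 2) = Rabs (ee 0) * (4^m * (INR m + 2) / 2)).
  { rewrite <- (Rabs_right (4^m * (INR m + 2) / 2)).
    rewrite <- Rabs_mult. f_equal. field.
    apply Rle_ge, Rlt_le. apply Rdiv_lt_0_compat; [nra|lra]. }
  rewrite HE in Hb.
  apply Rgt_lt in Hm.
  apply (Rmult_lt_compat_r (Rabs (ee 0))) in Hm; auto.
  unfold Rdiv in Hm. rewrite Rmult_assoc, Rinv_l, Rmult_1_r in Hm by lra.
  assert (Rabs (ee 0) * (INR m + 2) / 2 <= 5 * uu 0).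
  { apply Rmult_le_reg_l with (4^m); auto.
    replace (4 ^ m * (Rabs (ee 0) * (INR m + 2) / 2)) with (Rabs (ee 0) * (4 ^ m * (INR m + 2) / 2)) by field.
    lra. }
  nra.
Qed.

Lemma S_ratio m : Ssum (S m) = lam m * Ssum m.
Proof.
  assert (ee m = 0) by (rewrite e_closed, e0_zero; field).
  unfold ee in H. rewrite !S_as_u. simpl. nra.
Qed.

Theorem proposition5p1 (m : nat) :
  ex_series (fun n => weight n m) /\
  ex_series (fun n => INR n * weight n m) /\
  Series (fun n => INR n * weight n m) / Zm m
    = INR ((m + 1) * (2 * m + 1)) / 3.
Proof.
  destruct (T_part m) as [ExT HT].
  split; [apply ex_w|]. split; [exact ExT|].
  rewrite HT. unfold Zm.
  pose proof (S_ratio m) as HR. unfold Ssum in HR. rewrite HR.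
  pose proof (S_pos m) as HP. unfold Ssum in HP.
  rewrite mult_INR, !plus_INR, mult_INR. simpl (INR 1). simpl (INR 2).
  unfold aa, bb, lam. pose proof (pos_INR m). field. lra.
Qed.
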